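(* Let $k\ge2$ and let $\mathcal C_1$ be the binary code with generator matrix $[I_k\ \tilde G_k]$. Then every erasure pattern with at most $k-1$ erasures allows for parallel easy repair.
   Context: $\tilde G_k$ denotes the $k\times\frac{k(k-1)}{2}$ binary matrix whose columns are all vectors of $\mathbb F_2^k$ of Hamming weight $2$; $\mathcal C_1$ has length $n=\frac{k(k+1)}{2}$ and minimum distance $k$. Let $g_1,\dots,g_n$ be the columns of $[I_k\ \tilde G_k]$; nodes are the coordinates $c_1,\dots,c_n$ of codewords $c=u[I_k\ \tilde G_k]$. An erasure pattern is a set of erased nodes; the others are live. A node $c_i$ is related to distinct nodes $c_{j_1},\dots,c_{j_\gamma}$ (all different from $c_i$) if $g_i=g_{j_1}+\dots+g_{j_\gamma}$. An erased node allows for easy repair if it is related to $\gamma\le 2$ live nodes. An erasure pattern allows for parallel easy repair if each erased node allows for easy repair with respect to the original set of live nodes. *)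

(* Defs.v *)
From mathcomp Require Import all_boot all_algebra.
Set Implicit Arguments. Unset Strict Implicit. Unset Printing Implicit Defensive.
Import GRing.Theory.
Local Open Scope ring_scope.

(* Index set of the columns of tilde G_k: unordered pairs {i,j}, i<j, of 'I_k. *)
Definition wt2_index (k : nat) := {p : 'I_k * 'I_k | (p.1 < p.2)%N}.

(* Nodes of C_1 = coordinates = columns of [I_k  tilde G_k]:
   inl i  <-> the i-th column of I_k (the unit vector e_i),
   inr {i,j} <-> the column e_i + e_j of tilde G_k. *)
Definition node (k : nat) := ('I_k + wt2_index k)%type.

Definition unitv (k : nat) (i : 'I_k) : 'rV['F_2]_k := delta_mx 0 i.

Definition gcol (k : nat) (x : node k) : 'rV['F_2]_k :=
  match x with
  | inl i => unitv i
  | inr p => unitv (val p).1 + unitv (val p).2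
  end.

Definition related (k : nat) (x : node k) (S : {set node k}) : Prop :=
  (0 < #|S|)%N /\ x \notin S /\ gcol x = \sum_(y in S) gcol y.

Definition easy_repair (k : nat) (L : {set node k}) (x : node k) : Prop :=
  exists S : {set node k}, [/\ S \subset L, (#|S| <= 2)%N & related x S].

Definition parallel_easy_repair (k : nat) (E : {set node k}) : Prop :=
  forall x, x \in E -> easy_repair (~: E) x.

(* Main.v *)
Require Import Defs.
From mathcomp Require Import all_boot all_algebra.
From mathcomp Require Import zify.
Set Implicit Arguments. Unset Strict Implicit. Unset Printing Implicit Defensive.
Import GRing.Theory.

Lemma vv k (v : 'rV['F_2]_k) : (v + v = 0)%R.
Proof.
apply/matrixP => i j; rewrite !mxE; move: (v i j) => c.
by case: c => [[|[|[]]] ?] //; apply/val_inj.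
Qed.

Lemma L k (u v w : 'rV['F_2]_k) : (u + w = (u + v) + (v + w))%R.
Proof. by rewrite addrA -(addrA u) vv addr0. Qed.

Definition mkn k (u v : 'I_k) : node k :=
  if @insub _ (fun p : 'I_k * 'I_k => (p.1 < p.2)%N) (wt2_index k) (u, v) is Some q then inr q
  else if @insub _ (fun p : 'I_k * 'I_k => (p.1 < p.2)%N) (wt2_index k) (v, u) is Some q then inr q
  else inl u.

Lemma mknP k (u v : 'I_k) : u != v ->
  exists q : wt2_index k, mkn u v = inr q /\ (val q = (u, v) \/ val q = (v, u)).
Proof.
move=> huv; rewrite /mkn.
case: insubP => [q _ hq|hn]; first by exists q; split; [|left].
case: insubP => [q _ hq|hn2]; first by exists q; split; [|right].
exfalso; move: hn hn2 huv => /= hn hn2; rewrite neq_ltn.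
by rewrite (negbTE hn) (negbTE hn2).
Qed.

Lemma close k (E : {set node k}) x (y1 y2 : node k) : x \in E -> y1 != y2 ->
  x != y1 -> x != y2 -> y1 \notin E :\ x -> y2 \notin E :\ x ->
  gcol x = (gcol y1 + gcol y2)%R -> easy_repair (~: E) x.
Proof.
move=> xE h12 hx1 hx2 h1 h2 hg; exists [set y1; y2]; split.
- apply/subsetP => y; rewrite !inE; case/orP => /eqP ->.
  + by move: h1; rewrite !inE eq_sym (negbTE hx1).
  + by move: h2; rewrite !inE eq_sym (negbTE hx2).
- by rewrite cards2; case: (_ != _).
- split; first by rewrite cards2.
  split; first by rewrite !inE negb_or hx1 hx2.
  rewrite big_setU1 /= ?big_set1 // inE //.
Qed.

Lemma pig k (F : {set node k}) (o : node k -> 'I_k) (T : {set 'I_k}) :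
  (#|F| < #|T|)%N -> exists2 t, t \in T & t \notin o @: F.
Proof.
move=> hlt; apply/exists_inP; rewrite -negb_forall_in; apply/negP => /forall_inP H.
have : T \subset o @: F by apply/subsetP => t /H.
move/subset_leq_card => h; have := leq_imset_card o F.
by move=> h2; move: (leq_trans h h2); rewrite leqNgt hlt.
Qed.

Theorem theorem4p2 (k : nat) (hk : (2 <= k)%N) (E : {set node k}) :
  (#|E| <= k - 1)%N -> parallel_easy_repair E.
Proof.
move=> hE x xE.
have hF : (#|E :\ x| = #|E| - 1)%N by rewrite (cardsD1 x E) xE add1n subSS subn0.
have hT : forall i : 'I_k, #|[set~ i]| = (k - 1)%N by move=> i; rewrite cardsC1 card_ord subn1.
have hlt : forall i : 'I_k, (#|E :\ x| < #|[set~ i]|)%N.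
  move=> i; rewrite hF hT; have : (0 < #|E|)%N by apply/card_gt0P; exists x.
  move: hE hk; clear; lia.
have nin : forall (o : node k -> 'I_k) t y, t \notin o @: (E :\ x) -> o y = t -> y \notin E :\ x.
  by move=> o t y ht hy; apply/negP => hy'; move/negP: ht; apply; rewrite -hy imset_f.
case: x xE hF hlt nin => [i|[[a b] hab]] xE hF hlt nin.
- pose o (y : node k) : 'I_k := match y with inl t => t
    | inr q => if (val q).1 == i then (val q).2 else (val q).1 end.
  have [t] := pig o (hlt i); rewrite !inE => hti hto.
  rewrite eq_sym in hti; have [q [hq hv]] := mknP hti.
  apply: (close (y1 := inl t) (y2 := mkn i t)) => //.
  + by rewrite hq.
  + by rewrite hq.
  + by apply: (nin o t).
  + apply: (nin o t) => //; rewrite hq /o.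
    have hit : t != i by rewrite eq_sym.
    by case: hv => ->; rewrite /= ?eqxx // (negbTE hit).
  + rewrite hq /=; case: hv => -> /=.
    * by rewrite addrCA vv addr0.
    * by rewrite addrA vv add0r.
- pose o (y : node k) : 'I_k := match y with inl _ => a
    | inr q => if ((val q).1 == a) || ((val q).1 == b) then (val q).2 else (val q).1 end.
  have hab' : a != b by rewrite neq_ltn /= hab.
  have [t] := pig o (hlt b); rewrite !inE => htb hto.
  have [hta|hta] := eqVneq t a.
  + subst t; apply: (close (y1 := inl a) (y2 := inl b)) => //.
    * by apply: (nin o a).
    * by apply: (nin o a).
  + have hat : a != t by rewrite eq_sym.
    have [q1 [hq1 hv1]] := mknP hat.
    have [q2 [hq2 hv2]] := mknP htb.
    apply: (close (y1 := mkn a t) (y2 := mkn t b)) => //.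
    * rewrite hq1 hq2; apply/negP => /eqP [] heq; move: hv1 hv2; rewrite heq.
      by case=> -> [] [] *; subst; rewrite ?eqxx in hta htb hab'.
    * rewrite hq1; apply/negP => /eqP [] /(f_equal val) /= heq.
      by case: hv1 => e; rewrite e in heq; case: heq => *; subst; rewrite ?eqxx in hta htb hab'.
    * rewrite hq2; apply/negP => /eqP [] /(f_equal val) /= heq.
      by case: hv2 => e; rewrite e in heq; case: heq => *; subst; rewrite ?eqxx in hta htb hab'.
    * apply: (nin o t) => //; rewrite hq1 /o.
      by case: hv1 => -> /=; rewrite ?eqxx ?(negbTE hta) ?(negbTE htb) ?orbT.
    * apply: (nin o t) => //; rewrite hq2 /o.
      by case: hv2 => -> /=; rewrite ?eqxx ?(negbTE hta) ?(negbTE htb) ?orbT.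
    * rewrite hq1 hq2 /=; case: hv1 => -> /=; case: hv2 => -> /=;
      rewrite ?(addrC (unitv t) (unitv a)) ?(addrC (unitv b) (unitv t)); apply: L.
Qed.
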